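(* For every fixed $r\in\mathbb{N}$, the theory $\mathcal{T}_r$ is pseudofinite, and the theory $\mathcal{T}_\infty$ is pseudofinite.
   Context: Work in the language of graphs $\{R\}$. Let $\mathrm{Gr}$ be the axioms of simple graphs ($R$ irreflexive and symmetric) and let $\tau_n$ ($n\geq 3$) be the sentence $\forall y_1,\dots,y_n\,\neg\big(\bigwedge_{i<j}y_i\neq y_j\wedge\bigwedge_{i=1}^{n-1}y_iRy_{i+1}\wedge y_nRy_1\big)$ (no cycle of length $n$). $\mathcal{T}_\infty$ is axiomatized by $\mathrm{Gr}$, all $\tau_n$ ($n\geq 3$), and for each $n<\omega$ the sentence $\sigma_n$: $\forall x\exists y_1,\dots,y_n(\bigwedge_{i<j}y_i\neq y_j\wedge\bigwedge_i xRy_i)$ (every vertex has infinite degree). $\mathcal{T}_r$ is axiomatized by $\mathrm{Gr}$, all $\tau_n$ ($n\geq 3$), and the sentence saying every vertex has exactly $r$ neighbours. (Both theories are complete.) A theory $T$ is pseudofinite if every sentence implied by $T$ has a finite model; equivalently, $T$ has a model elementarily equivalent to an ultraproduct of finite structures. *)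

(* Defs.v *)
From Stdlib Require Import List Arith.
Import ListNotations.

Inductive form : Type :=
| FRel : nat -> nat -> form
| FEq  : nat -> nat -> form
| FBot : form
| FImp : form -> form -> form
| FAnd : form -> form -> form
| FOr  : form -> form -> form
| FAll : nat -> form -> form
| FEx  : nat -> form -> form.

Definition FNot (p : form) : form := FImp p FBot.
Definition FTop : form := FImp FBot FBot.

Fixpoint fv (p : form) : list nat :=
  match p with
  | FRel i j | FEq i j => [i; j]
  | FBot => []
  | FImp p q | FAnd p q | FOr p q => fv p ++ fv q
  | FAll x p | FEx x p => remove Nat.eq_dec x (fv p)
  end.

Definition sentence (p : form) : Prop := fv p = [].

Record structure : Type := Structure {
  carrier :> Type;
  witness : carrier;
  rel : carrier -> carrier -> Prop }.

Definition upd {M : Type} (v : nat -> M) (x : nat) (d : M) : nat -> M :=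
  fun y => if Nat.eq_dec y x then d else v y.

Fixpoint sat (M : structure) (v : nat -> M) (p : form) : Prop :=
  match p with
  | FRel i j => rel M (v i) (v j)
  | FEq i j => v i = v j
  | FBot => False
  | FImp p q => sat M v p -> sat M v q
  | FAnd p q => sat M v p /\ sat M v q
  | FOr p q => sat M v p \/ sat M v q
  | FAll x p => forall d : M, sat M (upd v x d) p
  | FEx x p => exists d : M, sat M (upd v x d) p
  end.

(* M |= p (for all assignments; for sentences this is the usual notion). *)
Definition models_form (M : structure) (p : form) : Prop :=
  forall v : nat -> M, sat M v p.

Definition theory := form -> Prop.

Definition models (M : structure) (T : theory) : Prop :=
  forall p, T p -> models_form M p.

Definition implies (T : theory) (p : form) : Prop :=
  forall M : structure, models M T -> models_form M p.

Definition finite_structure (M : structure) : Prop :=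
  exists l : list M, forall x : M, In x l.

Definition pseudofinite (T : theory) : Prop :=
  forall p, sentence p -> implies T p ->
    exists M : structure, finite_structure M /\ models_form M p.

Fixpoint bigAnd (l : list form) : form :=
  match l with [] => FTop | p :: l' => FAnd p (bigAnd l') end.
Fixpoint bigOr (l : list form) : form :=
  match l with [] => FBot | p :: l' => FOr p (bigOr l') end.
Definition allv (xs : list nat) (p : form) : form := fold_right FAll p xs.
Definition exv (xs : list nat) (p : form) : form := fold_right FEx p xs.

Fixpoint distinctF (xs : list nat) : form :=
  match xs with
  | [] => FTop
  | x :: xs' => FAnd (bigAnd (map (fun y => FNot (FEq x y)) xs')) (distinctF xs')
  end.

Fixpoint pathF (xs : list nat) : form :=
  match xs with
  | x :: ((y :: _) as t) => FAnd (FRel x y) (pathF t)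
  | _ => FTop
  end.

Definition irrefl_ax : form := FAll 0 (FNot (FRel 0 0)).
Definition symm_ax : form := FAll 0 (FAll 1 (FImp (FRel 0 1) (FRel 1 0))).

Definition tau (n : nat) : form :=
  let ys := seq 1 n in
  allv ys (FNot (FAnd (distinctF ys) (FAnd (pathF ys) (FRel n 1)))).

Definition sigma (n : nat) : form :=
  let ys := seq 1 n in
  FAll 0 (exv ys (FAnd (distinctF ys) (bigAnd (map (FRel 0) ys)))).

Definition degree_eq (r : nat) : form :=
  let ys := seq 1 r in
  let z := S r in
  FAll 0 (exv ys (FAnd (distinctF ys)
                 (FAnd (bigAnd (map (FRel 0) ys))
                       (FAll z (FImp (FRel 0 z) (bigOr (map (FEq z) ys))))))).

Definition T_r (r : nat) : theory := fun p =>
  p = irrefl_ax \/ p = symm_ax \/ (exists n, 3 <= n /\ p = tau n) \/ p = degree_eq r.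

Definition T_inf : theory := fun p =>
  p = irrefl_ax \/ p = symm_ax \/ (exists n, 3 <= n /\ p = tau n) \/
  (exists n, p = sigma n).

(* Main.v *)
Require Import Defs.
From Stdlib Require Import List Arith Lia Classical ClassicalEpsilon FunctionalExtensionality PropExtensionality ProofIrrelevance.
Import ListNotations.

Lemma upd_eq {M : Type} (v : nat -> M) x d : upd v x d x = d.
Proof. unfold upd; destruct (Nat.eq_dec x x); congruence. Qed.
Lemma upd_neq {M : Type} (v : nat -> M) x d y : y <> x -> upd v x d y = v y.
Proof. unfold upd; destruct (Nat.eq_dec y x); congruence. Qed.

Lemma sat_agree (M : structure) p : forall v v',
  (forall y, In y (fv p) -> v y = v' y) -> (sat M v p <-> sat M v' p).
Proof.
  induction p; simpl; intros v v' H.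
  - rewrite (H n) by auto. rewrite (H n0) by auto. tauto.
  - rewrite (H n) by auto. rewrite (H n0) by auto. tauto.
  - tauto.
  - rewrite (IHp1 v v'), (IHp2 v v'); try tauto; intros; apply H; apply in_or_app; auto.
  - rewrite (IHp1 v v'), (IHp2 v v'); try tauto; intros; apply H; apply in_or_app; auto.
  - rewrite (IHp1 v v'), (IHp2 v v'); try tauto; intros; apply H; apply in_or_app; auto.
  - split; intros H1 d; [rewrite <- (IHp (upd v n d)) | rewrite (IHp (upd v n d) (upd v' n d))]; auto;
    intros y Hy; unfold upd; destruct (Nat.eq_dec y n); auto; apply H; apply in_in_remove; auto.
  - split; intros [d H1]; exists d; [rewrite <- (IHp (upd v n d)) | rewrite (IHp (upd v n d) (upd v' n d))]; auto;
    intros y Hy; unfold upd; destruct (Nat.eq_dec y n); auto; apply H; apply in_in_remove; auto.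
Qed.

Lemma sentence_all (M : structure) p v : sentence p -> sat M v p -> models_form M p.
Proof.
  intros Hs H v'. apply (sat_agree M p v v'); auto. unfold sentence in Hs. rewrite Hs. simpl; tauto.
Qed.

Section Ultra.
Variable A : nat -> structure.
Variable U : (nat -> Prop) -> Prop.
Hypothesis HI : forall P Q, U P -> U Q -> U (fun n => P n /\ Q n).
Hypothesis HM : forall P Q : nat -> Prop, (forall n, P n -> Q n) -> U P -> U Q.
Hypothesis HP : ~ U (fun _ => False).
Hypothesis HU : forall P, U P \/ U (fun n => ~ P n).

Lemma Ufull P : (forall n, P n) -> U P.
Proof. intros H. destruct (HU (fun _ => False)) as [H1|H1]. contradiction. eapply HM; [|exact H1]. auto. Qed.

Lemma Unot P : U P -> ~ U (fun n => ~ P n).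
Proof. intros H1 H2. apply HP. eapply HM; [|exact (HI _ _ H1 H2)]. simpl; tauto. Qed.

Definition Prod := forall n, A n.
Definition eqU (x y : Prod) : Prop := U (fun n => x n = y n).
Definition cls (x : Prod) : Prod -> Prop := fun y => eqU x y.
Definition UPcar := {c : Prod -> Prop | exists x, c = cls x}.
Definition rep (c : UPcar) : Prod := proj1_sig (constructive_indefinite_description _ (proj2_sig c)).
Lemma rep_spec c : proj1_sig c = cls (rep c).
Proof. unfold rep. destruct (constructive_indefinite_description _ _); auto. Qed.
Definition mk (x : Prod) : UPcar := exist _ (cls x) (ex_intro _ x eq_refl).
Lemma mk_rep c : mk (rep c) = c.
Proof. destruct c as [c Hc]. unfold mk. apply eq_sig_hprop. intros; apply proof_irrelevance.
  simpl. symmetry. exact (rep_spec (exist _ c Hc)). Qed.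
Lemma mk_eq x y : mk x = mk y <-> eqU x y.
Proof.
  split.
  - intros H. assert (E : cls x = cls y) by (apply (f_equal (@proj1_sig _ _)) in H; exact H).
    assert (cls y y) by (apply Ufull; auto). rewrite <- E in H0. exact H0.
  - intros H. unfold mk. apply eq_sig_hprop. intros; apply proof_irrelevance. simpl.
    extensionality z. apply propositional_extensionality. unfold cls, eqU. split; intros H1.
    + eapply HM; [|exact (HI _ _ H H1)]. simpl; intros n [E1 E2]; congruence.
    + eapply HM; [|exact (HI _ _ H H1)]. simpl; intros n [E1 E2]; congruence.
Qed.
Lemma rep_mk x : eqU (rep (mk x)) x.
Proof. apply mk_eq. apply mk_rep. Qed.

Definition UP : structure := Structure UPcar (mk (fun n => witness (A n)))
  (fun a b => U (fun n => rel (A n) (rep a n) (rep b n))).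

Lemma upd_comp (w : nat -> Prod) x (D : Prod) n :
  (fun y => upd w x D y n) = upd (fun y => w y n) x (D n).
Proof. extensionality y. unfold upd. destruct (Nat.eq_dec y x); auto. Qed.

Lemma upd_mk (w : nat -> Prod) x d :
  upd (fun y => mk (w y)) x d = (fun y => mk (upd w x (rep d) y)).
Proof. extensionality y. unfold upd. destruct (Nat.eq_dec y x); auto. symmetry; apply mk_rep. Qed.

Theorem los p : forall w : nat -> Prod,
  sat UP (fun y => mk (w y)) p <-> U (fun n => sat (A n) (fun y => w y n) p).
Proof.
  induction p; intros w; simpl.
  - split; intros H.
    + eapply HM; [|exact (HI _ _ (HI _ _ H (rep_mk (w n))) (rep_mk (w n0)))].
      simpl. intros m [[H1 E1] E2]. rewrite <- E1, <- E2; auto.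
    + eapply HM; [|exact (HI _ _ (HI _ _ H (rep_mk (w n))) (rep_mk (w n0)))].
      simpl. intros m [[H1 E1] E2]. rewrite E1, E2; auto.
  - apply mk_eq.
  - split; [tauto|]. intros H; apply HP; auto.
  - rewrite IHp1, IHp2. split.
    + intros H. destruct (HU (fun n => sat (A n) (fun y => w y n) p1)) as [H1|H1].
      * eapply HM; [|exact (H H1)]. simpl; auto.
      * eapply HM; [|exact H1]. simpl; tauto.
    + intros H H1. eapply HM; [|exact (HI _ _ H H1)]. simpl; tauto.
  - rewrite IHp1, IHp2. split.
    + intros [H1 H2]; exact (HI _ _ H1 H2).
    + intros H; split; eapply HM; try exact H; simpl; tauto.
  - rewrite IHp1, IHp2. split.
    + intros [H1|H1]; eapply HM; try exact H1; simpl; tauto.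
    + intros H. destruct (HU (fun n => sat (A n) (fun y => w y n) p1)) as [H1|H1]; [left; auto|].
      right. eapply HM; [|exact (HI _ _ H H1)]. simpl; tauto.
  - split.
    + intros H. destruct (HU (fun m => forall d : A m, sat (A m) (upd (fun y => w y m) n d) p)) as [H1|H1]; auto.
      exfalso.
      set (D := fun m => epsilon (inhabits (witness (A m)))
                 (fun d : A m => ~ sat (A m) (upd (fun y => w y m) n d) p)).
      specialize (H (mk D)). rewrite upd_mk, IHp in H.
      apply HP. eapply HM; [|exact (HI _ _ (HI _ _ H H1) (rep_mk D))].
      simpl. intros m [[H2 H3] E]. apply H3. intros d.
      rewrite upd_comp in H2. rewrite E in H2.
      apply NNPP. intros H4.
      apply (epsilon_spec (inhabits (witness (A m))) (fun d : A m => ~ sat (A m) (upd (fun y => w y m) n d) p)).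
      exists d; auto. exact H2.
    + intros H d. rewrite upd_mk, IHp. eapply HM; [|exact H]. simpl. intros m H1.
      rewrite upd_comp. apply H1.
  - split.
    + intros [d H]. rewrite upd_mk, IHp in H. eapply HM; [|exact H]. simpl; intros m H1.
      rewrite upd_comp in H1. eexists; exact H1.
    + intros H.
      set (D := fun m => epsilon (inhabits (witness (A m)))
                 (fun d : A m => sat (A m) (upd (fun y => w y m) n d) p)).
      exists (mk D). rewrite upd_mk, IHp.
      eapply HM; [|exact (HI _ _ H (rep_mk D))]. simpl. intros m [H1 E].
      rewrite upd_comp, E. apply (epsilon_spec (inhabits (witness (A m)))
        (fun d : A m => sat (A m) (upd (fun y => w y m) n d) p)). exact H1.
Qed.

Lemma UP_models p : (exists N, forall n, N <= n -> models_form (A n) p) ->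
  (forall N, U (fun n => N <= n)) -> models_form UP p.
Proof.
  intros [N HN] Hcof v.
  replace v with (fun y => mk (rep (v y))) by (extensionality y; apply mk_rep).
  apply (los p (fun y => rep (v y))). eapply HM; [|exact (Hcof N)]. intros n Hn. apply HN; auto.
Qed.

Lemma UP_some p : models_form UP p -> exists n v, sat (A n) v p.
Proof.
  intros H. specialize (H (fun _ => mk (fun n => witness (A n)))).
  apply (los p (fun _ => fun n => witness (A n))) in H.
  apply NNPP; intros H1. apply HP. eapply HM; [|exact H]. intros n Hn; apply H1; exists n, (fun _ => witness (A n)); exact Hn.
Qed.
End Ultra.

Definition ultra_ok (U : (nat -> Prop) -> Prop) : Prop :=
  (forall P Q, U P -> U Q -> U (fun n => P n /\ Q n)) /\
  (forall P Q : nat -> Prop, (forall n, P n -> Q n) -> U P -> U Q) /\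
  ~ U (fun _ => False) /\
  (forall P, U P \/ U (fun n => ~ P n)) /\
  (forall N, U (fun n => N <= n)).

Lemma pf_of_family (T : theory) (A : nat -> structure) :
  (exists U, ultra_ok U) ->
  (forall n, finite_structure (A n)) ->
  (forall p, T p -> exists N, forall n, N <= n -> models_form (A n) p) ->
  pseudofinite T.
Proof.
  intros [U [HI [HM [HP [HU Hc]]]]] Hfin HT p Hs Himp.
  assert (HUP : models_form (UP A U) p).
  { apply Himp. intros q Hq. eapply UP_models; eauto. }
  edestruct (UP_some A U) as [n [v Hv]]; eauto.
  exists (A n). split; auto. eapply sentence_all; eauto.
Qed.

Lemma sat_allv (M : structure) xs : forall v p,
  sat M v (allv xs p) <-> forall w, (forall y, ~ In y xs -> w y = v y) -> sat M w p.
Proof.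
  unfold allv. induction xs as [|a xs IH]; simpl; intros v p.
  - split.
    + intros H w Hw. replace w with v; auto. extensionality y; symmetry; auto.
    + intros H; apply H; auto.
  - split.
    + intros H w Hw. specialize (H (w a)). rewrite IH in H. apply H. intros y Hy.
      unfold upd. destruct (Nat.eq_dec y a). subst; auto. apply Hw. intros [E|E]; auto.
    + intros H d. rewrite IH. intros w Hw. apply H. intros y Hy.
      rewrite Hw by (intro; apply Hy; right; auto). unfold upd.
      destruct (Nat.eq_dec y a); [subst; exfalso; apply Hy; left; auto | auto].
Qed.

Lemma sat_exv (M : structure) xs : forall v p,
  sat M v (exv xs p) <-> exists w, (forall y, ~ In y xs -> w y = v y) /\ sat M w p.
Proof.
  unfold exv. induction xs as [|a xs IH]; simpl; intros v p.
  - split.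
    + intros H; exists v; auto.
    + intros [w [Hw H]]. replace v with w; auto. extensionality y; auto.
  - split.
    + intros [d H]. rewrite IH in H. destruct H as [w [Hw H]]. exists w; split; auto.
      intros y Hy. rewrite Hw by tauto. apply upd_neq. intro; subst; tauto.
    + intros [w [Hw H]]. exists (w a). rewrite IH. exists w. split; auto.
      intros y Hy. unfold upd. destruct (Nat.eq_dec y a). subst; auto. apply Hw. intros [E|E]; auto.
Qed.

Lemma sat_bigAnd (M : structure) v l : sat M v (bigAnd l) <-> forall q, In q l -> sat M v q.
Proof.
  induction l; simpl. split; [tauto| intros _ H; exact H].
  rewrite IHl. split. intros [H1 H2] q [E|E]; subst; auto. intros H; split; auto.
Qed.

Lemma sat_bigOr (M : structure) v l : sat M v (bigOr l) <-> exists q, In q l /\ sat M v q.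
Proof.
  induction l; simpl. split; [tauto| intros [q [[] _]]].
  rewrite IHl. split. intros [H|[q [H1 H2]]]; eauto. intros [q [[E|E] H]]; subst; eauto.
Qed.

Lemma sat_distinctF (M : structure) v xs : sat M v (distinctF xs) <-> NoDup (map v xs).
Proof.
  induction xs; simpl. split; [constructor| intros _ H; exact H].
  rewrite sat_bigAnd, IHxs, NoDup_cons_iff. split.
  - intros [H1 H2]; split; auto. intros Hin. apply in_map_iff in Hin. destruct Hin as [y [E Hy]].
    apply (H1 (FNot (FEq a y))). apply in_map_iff; eauto. simpl. auto.
  - intros [H1 H2]; split; auto. intros q Hq. apply in_map_iff in Hq. destruct Hq as [y [E Hy]]; subst.
    simpl. intros E. apply H1. rewrite E. apply in_map; auto.
Qed.

Lemma NoDup_map_inj {X Y : Type} (f : X -> Y) l : NoDup (map f l) ->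
  forall i j, In i l -> In j l -> f i = f j -> i = j.
Proof.
  induction l; simpl; intros H i j Hi Hj E. contradiction.
  inversion H; subst. destruct Hi as [<-|Hi]; destruct Hj as [<-|Hj]; auto.
  - exfalso; apply H2. rewrite E. apply in_map; auto.
  - exfalso; apply H2. rewrite <- E. apply in_map; auto.
Qed.

Lemma sat_pathF_seq (M : structure) v n : forall a,
  sat M v (pathF (seq a n)) <-> forall k, S k < n -> rel M (v (a + k)) (v (a + S k)).
Proof.
  induction n; intros a. simpl. split; [intros; lia| intros _ H; exact H].
  destruct n. simpl. split; [intros; lia| intros _ H; exact H].
  change (seq a (S (S n))) with (a :: seq (S a) (S n)).
  change (pathF (a :: S a :: seq (S (S a)) n)) with (FAnd (FRel a (S a)) (pathF (seq (S a) (S n)))).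
  change (rel M (v a) (v (S a)) /\ sat M v (pathF (seq (S a) (S n))) <-> forall k, S k < S (S n) -> rel M (v (a + k)) (v (a + S k))). rewrite IHn. split.
  - intros [H1 H2] k Hk. destruct k. rewrite Nat.add_0_r, Nat.add_1_r; auto.
    specialize (H2 k). replace (a + S k) with (S a + k) by lia. replace (a + S (S k)) with (S a + S k) by lia. apply H2; lia.
  - intros H; split. specialize (H 0). rewrite Nat.add_0_r, Nat.add_1_r in H; apply H; lia.
    intros k Hk. specialize (H (S k)). replace (S a + k) with (a + S k) by lia. replace (S a + S k) with (a + S (S k)) by lia. apply H; lia.
Qed.

Definition good (G : structure) (r g : nat) : Prop :=
  finite_structure G /\
  (forall x, ~ rel G x x) /\
  (forall x y, rel G x y -> rel G y x) /\
  (exists nb : G -> nat -> G, (forall x y, rel G x y <-> exists k, k < r /\ y = nb x k) /\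
      (forall x i j, i < r -> j < r -> nb x i = nb x j -> i = j)) /\
  (forall n (y : nat -> G), 3 <= n -> n <= g ->
     (forall i j, 1 <= i <= n -> 1 <= j <= n -> y i = y j -> i = j) ->
     (forall k, 1 <= k -> k < n -> rel G (y k) (y (S k))) ->
     rel G (y n) (y 1) -> False).

Lemma good_weak G r g : good G r (S g) -> good G r g.
Proof. intros [H1 [H2 [H3 [H4 H5]]]]. repeat split; auto. intros n y Ha Hb. apply H5; auto. Qed.

Section Good.
Variables (G : structure) (r g : nat).
Hypothesis HG : good G r g.

Lemma good_irrefl : models_form G irrefl_ax.
Proof. destruct HG as [_ [H _]]. intros v d. simpl. rewrite upd_eq. apply H. Qed.

Lemma good_symm : models_form G symm_ax.
Proof. destruct HG as [_ [_ [H _]]]. intros v d e. simpl. rewrite !upd_eq, upd_neq by lia.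
  rewrite upd_eq. apply H. Qed.

Lemma good_tau n : 3 <= n -> n <= g -> models_form G (tau n).
Proof.
  destruct HG as [_ [_ [_ [_ H]]]]. intros H3 Hg v. unfold tau. apply sat_allv. intros w _.
  simpl. intros [Hd [Hp Hr]]. rewrite sat_distinctF in Hd. rewrite sat_pathF_seq in Hp.
  apply (H n w H3 Hg).
  - intros i j Hi Hj E. apply (NoDup_map_inj w _ Hd); auto; apply in_seq; lia.
  - intros k Hk1 Hk2. specialize (Hp (k - 1)). replace k with (1 + (k - 1)) at 1 by lia.
    replace (S k) with (1 + S (k - 1)) by lia. apply Hp; lia.
  - exact Hr.
Qed.

Definition wv (nb : G -> nat -> G) (v : nat -> G) (d : G) (b : nat) : nat -> G :=
  fun y => match y with 0 => d | S k => if k <? b then nb d k else v (S k) end.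

Lemma wv_agree nb v d b y : ~ In y (seq 1 b) -> wv nb v d b y = upd v 0 d y.
Proof.
  intros H. destruct y as [|k]; simpl. rewrite upd_eq; auto. rewrite upd_neq by lia.
  destruct (Nat.ltb_spec k b); auto. exfalso; apply H; apply in_seq; lia.
Qed.

Lemma wv_nodup nb v d b : b <= r -> (forall x i j, i < r -> j < r -> nb x i = nb x j -> i = j) ->
  NoDup (map (wv nb v d b) (seq 1 b)).
Proof.
  intros Hb Hinj. apply NoDup_map_NoDup_ForallPairs; [|apply seq_NoDup].
  intros i j Hi Hj E. apply in_seq in Hi, Hj. destruct i; [lia|]. destruct j; [lia|]. simpl in E.
  destruct (Nat.ltb_spec i b); [|lia]. destruct (Nat.ltb_spec j b); [|lia].
  f_equal. apply (Hinj d); auto; lia.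
Qed.

Lemma wv_adj nb v d b : b <= r -> (forall x y, rel G x y <-> exists k, k < r /\ y = nb x k) ->
  forall y, In y (seq 1 b) -> rel G (wv nb v d b 0) (wv nb v d b y).
Proof.
  intros Hb Hnb y Hy. apply in_seq in Hy. destruct y; [lia|]. simpl.
  destruct (Nat.ltb_spec y b); [|lia]. apply Hnb. exists y; split; auto; lia.
Qed.

Lemma good_sigma m : m <= r -> models_form G (sigma m).
Proof.
  destruct HG as [_ [_ [_ [[nb [Hnb Hinj]] _]]]]. intros Hm v d. unfold sigma.
  apply sat_exv. exists (wv nb (upd v 0 d) d m). split.
  - intros y Hy. rewrite wv_agree; auto. unfold upd. destruct (Nat.eq_dec y 0); auto.
  - simpl. split. apply sat_distinctF, wv_nodup; auto.
    apply sat_bigAnd. intros q Hq. apply in_map_iff in Hq. destruct Hq as [y [<- Hy]].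
    simpl. apply wv_adj; auto.
Qed.

Lemma good_degree : models_form G (degree_eq r).
Proof.
  destruct HG as [_ [_ [_ [[nb [Hnb Hinj]] _]]]]. intros v d. unfold degree_eq.
  apply sat_exv. exists (wv nb (upd v 0 d) d r). split.
  - intros y Hy. rewrite wv_agree; auto. unfold upd. destruct (Nat.eq_dec y 0); auto.
  - simpl. split; [|split].
    + apply sat_distinctF, wv_nodup; auto.
    + apply sat_bigAnd. intros q Hq. apply in_map_iff in Hq. destruct Hq as [y [<- Hy]].
      simpl. apply wv_adj; auto.
    + intros e. rewrite upd_eq, upd_neq by lia. simpl. intros He.
      apply Hnb in He. destruct He as [k [Hk ->]].
      apply sat_bigOr. exists (FEq (S r) (S k)). split.
      * apply in_map. apply in_seq. lia.
      * simpl. rewrite upd_eq, upd_neq by lia. simpl. destruct (Nat.ltb_spec k r); [auto|lia].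
Qed.
End Good.

Lemma pf_Tr (r : nat) (Gr : nat -> structure) :
  (exists U, ultra_ok U) -> (forall g, good (Gr g) r g) -> pseudofinite (T_r r).
Proof.
  intros HU HG. apply (pf_of_family _ Gr HU).
  - intros n; apply (HG n).
  - intros p [->|[->|[[n [Hn ->]]| ->]]].
    + exists 0; intros; eapply good_irrefl; [apply HG|..]; auto; lia.
    + exists 0; intros; eapply good_symm; [apply HG|..]; auto; lia.
    + exists n; intros m Hm; eapply good_tau; [apply HG|..]; auto; lia.
    + exists 0; intros m _; eapply good_degree; [apply HG|..]; auto; lia.
Qed.

Lemma pf_Tinf (Gr : nat -> structure) :
  (exists U, ultra_ok U) -> (forall g, good (Gr g) g g) -> pseudofinite T_inf.
Proof.
  intros HU HG. apply (pf_of_family _ Gr HU).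
  - intros n; apply (HG n).
  - intros p [->|[->|[[n [Hn ->]]| [n ->]]]].
    + exists 0; intros; eapply good_irrefl; [apply HG|..]; auto; lia.
    + exists 0; intros; eapply good_symm; [apply HG|..]; auto; lia.
    + exists n; intros m Hm; eapply good_tau; [apply HG|..]; auto; lia.
    + exists n; intros m Hm; eapply good_sigma; [apply HG|..]; auto; lia.
Qed.

From mathcomp Require Import all_boot all_fingroup zify.
From mathcomp Require Import boolp classical_sets filter.
Set Bullet Behavior "Strict Subproofs".
Module UF.
Import classical_sets filter.
Local Open Scope classical_set_scope.
Lemma ultra_exists : exists U : (nat -> Prop) -> Prop,
  (forall A B, U A -> U B -> U (fun n => A n /\ B n)) /\
  (forall A B : nat -> Prop, (forall n, A n -> B n) -> U A -> U B) /\
  ~ U (fun _ => False) /\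
  (forall A, U A \/ U (fun n => ~ A n)) /\
  (forall N, U (fun n => (N <= n)%coq_nat)).
Proof.
have [G [GU sub]] := ultraFilterLemma (@eventually_filter).
exists G; split; [|split; [|split; [|split]]].
- move=> A B HA HB. exact: (@filterI _ G _ A B HA HB).
- move=> A B AB HA; apply: (@filterS _ G _ A B) => //; exact: AB.
- move=> H. have := @filter_not_empty _ G _. apply. by rewrite (_ : set0 = (fun _ => False)).
- move=> A; exact: in_ultra_setVsetC.
- move=> N; apply: sub; exists N => // n /= /leP; done.
Qed.
End UF.

Module Graph.
Import GroupScope.
Section G.
Variables r g : nat.

Fixpoint red (w : seq 'I_r) : bool :=
  match w with x :: ((y :: _) as w') => (x != y) && red w' | _ => true end.

Definition B := {w : g.-bseq 'I_r | red w}.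

Lemma red_cons i w : red (i :: w) = (ohead w != Some i) && red w.
Proof. by case: w => [|y w] //=; rewrite (inj_eq (@Some_inj _)) eq_sym. Qed.

Definition sseq (i : 'I_r) (w : seq 'I_r) : seq 'I_r :=
  if ohead w == Some i then behead w else if size w < g then i :: w else w.

Lemma sseq_ok i w : size w <= g -> red w -> (size (sseq i w) <= g) && red (sseq i w).
Proof.
move=> Hs Hr; rewrite /sseq; case: eqP => H.
- case: w Hs Hr H => [|y w] //= Hs Hr _; apply/andP; split; first by lia.
  by case: w Hr {Hs} => [|z w] //= /andP [].
- case: ifP => Hg; last by rewrite Hs Hr.
  rewrite red_cons Hr andbT /=; apply/andP; split; [lia| by apply/eqP].
Qed.

Lemma sseq_hd i w' : sseq i (i :: w') = w'.
Proof. by rewrite /sseq /= eqxx. Qed.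
Lemma sseq_nhd i w : ohead w != Some i -> size w < g -> sseq i w = i :: w.
Proof. by move=> H1 H2; rewrite /sseq (negbTE H1) H2. Qed.
Lemma sseq_full i w : ohead w != Some i -> ~~ (size w < g) -> sseq i w = w.
Proof. by move=> H1 H2; rewrite /sseq (negbTE H1) (negbTE H2). Qed.

Lemma sseqK i w : size w <= g -> red w -> sseq i (sseq i w) = w.
Proof.
move=> Hs Hr; case: (boolP (ohead w == Some i)) => H.
- case: w Hs Hr H => [|y w] // Hs; rewrite red_cons => /andP [Hy _] /eqP [<-].
  by rewrite sseq_hd sseq_nhd //; simpl in Hs; lia.
- case: (boolP (size w < g)) => Hg.
  + by rewrite (sseq_nhd _ _ H Hg) sseq_hd.
  + by rewrite !(sseq_full _ _ H Hg).
Qed.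

Definition sB (i : 'I_r) (x : B) : B := insubd x (insub_bseq g (sseq i (val (val x)))).

Lemma sB_val i x : val (val (sB i x)) = sseq i (val (val x)).
Proof.
have /andP [Hs Hr] := sseq_ok i _ (size_bseq (val x)) (valP x).
have E : val (insub_bseq g (sseq i (val (val x)))) = sseq i (val (val x)).
  by rewrite /insub_bseq val_insubd Hs.
by rewrite /sB val_insubd E Hr E.
Qed.

Lemma sB_inv i : involutive (sB i).
Proof.
move=> x; apply: val_inj; apply: val_inj.
by rewrite !sB_val sseqK // ?(size_bseq (val x)) ?(valP x).
Qed.

Definition s (i : 'I_r) : {perm B} := perm (can_inj (sB_inv i)).
Lemma sE i x : s i x = sB i x. Proof. exact: permE. Qed.

Lemma ss i : s i * s i = 1.
Proof. by apply/permP => x; rewrite permM !sE sB_inv perm1. Qed.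

Definition eps : B := exist (fun w : g.-bseq 'I_r => red w) [bseq] isT.

Definition sn (k : nat) : {perm B} := if @insub nat _ _ k is Some i then s (i : 'I_r) else 1.
Lemma snE (i : 'I_r) : sn i = s i.
Proof. by rewrite /sn valK. Qed.

Definition actp (w : seq 'I_r) : {perm B} := foldr (fun i P => P * s i) 1 w.

Lemma actp_eps w : size w <= g -> red w -> val (val (actp w eps)) = w.
Proof.
elim: w => [|i w IH]; first by rewrite /= perm1.
move=> Hs; rewrite red_cons => /andP [Hh Hr] /=; simpl in Hs.
rewrite permM sE sB_val IH //; last by lia.
by rewrite /sseq (negbTE Hh) ifT //; lia.
Qed.

Lemma s_eps (i : 'I_r) : 0 < g -> val (val (s i eps)) = [:: i].
Proof. by move=> Hg; rewrite sE sB_val /sseq /= Hg. Qed.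

Definition Gr : structure :=
  Structure {perm B} 1 (fun f h => exists k, (k < r)%coq_nat /\ h = f * sn k).

Lemma inP {T : eqType} (x : T) l : x \in l -> List.In x l.
Proof. elim: l => //= y l IH; rewrite in_cons => /orP [/eqP ->|/IH]; auto. Qed.

Lemma sn_ord {k : nat} (Hk : (k < r)%coq_nat) : exists i : 'I_r, sn k = s i /\ nat_of_ord i = k.
Proof. have Hk' : k < r by apply/ltP. exists (Ordinal Hk'); split => //; exact: (snE (Ordinal Hk')). Qed.

Lemma Gr_good : 0 < g -> good Gr r g.
Proof.
move=> Hg; split; [|split; [|split; [|split]]].
- exists (enum {perm B}) => x; apply: inP; by rewrite mem_enum.
- move=> f [k [Hk E]]. have [i [Ei _]] := sn_ord Hk. rewrite Ei in E.
  have Hs1 : s i = 1 by apply: (mulgI f); rewrite mulg1 -E.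
  by have := s_eps i Hg; rewrite Hs1 perm1.
- move=> f h [k [Hk E]]; exists k; split => //.
  have [i [Ei _]] := sn_ord Hk. rewrite Ei in E *. by rewrite E -mulgA ss mulg1.
- exists (fun f k => f * sn k); split; first by move=> x y; split.
  move=> f i j Hi Hj E.
  have [a [Ea Va]] := sn_ord Hi; have [b [Eb Vb]] := sn_ord Hj.
  rewrite Ea Eb in E. have E2 : s a = s b by apply: (mulgI f); exact: E.
  have := s_eps a Hg; rewrite E2 s_eps // => -[Eab]. by rewrite -Va -Vb Eab.
- move=> n y H3 Hgn Hinj Hadj Hcl.
  have inv : forall k, k.+1 <= n -> exists w : seq 'I_r,
      [/\ size w = k, red w, y k.+1 = y 1%N * actp w & (0 < k -> y k = y 1%N * actp (behead w))].
  { elim => [|k IH] Hk.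
    - by exists [::]; split => //; rewrite /= mulg1.
    - have [w [Hsz Hr E1 E2]] := IH (ltnW Hk).
      have [j [Hj Ej]] := Hadj k.+1 ltac:(lia) ltac:(lia).
      have [i [Ei Vi]] := sn_ord Hj. rewrite Ei in Ej.
      exists (i :: w); split.
      + by rewrite /= Hsz.
      + rewrite red_cons Hr andbT. apply/eqP => Hh.
        case: w Hsz Hr E1 E2 Hh => [|i0 w0] //= Hsz Hr E1 E2 [Hi0]. subst i0.
        have E3 := E2 ltac:(lia).
        have Eq : y k.+2 = y k by rewrite Ej E1 E3 -!mulgA ss mulg1.
        have := Hinj k.+2 k ltac:(lia) ltac:(lia) Eq. lia.
      + by rewrite Ej E1 /= mulgA.
      + by move=> _; rewrite /= E1. }
  have [w [Hsz Hr E1 E2]] := inv n.-1 ltac:(lia).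
  have En : (n.-1).+1 = n by lia. rewrite En in E1.
  case: Hcl => j [Hj Ej]. have [i [Ei Vi]] := sn_ord Hj. rewrite Ei in Ej.
  have Hred : red (i :: w).
  { rewrite red_cons Hr andbT. apply/eqP => Hh.
    case: w Hsz Hr E1 E2 Hh => [|i0 w0] //= Hsz Hr E1 E2 [Hi0]. subst i0.
    have E3 := E2 ltac:(lia).
    have Eq : y 1%N = y n.-1 by rewrite Ej E1 E3 -!mulgA ss mulg1.
    have := Hinj 1%N n.-1 ltac:(lia) ltac:(lia) Eq. lia. }
  have Ha : actp (i :: w) = 1.
  { apply: (mulgI (y 1%N)). by rewrite mulg1 /= mulgA -E1 -Ej. }
  have := actp_eps (i :: w) ltac:(simpl; lia) Hred. by rewrite Ha perm1.
Qed.

End G.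
End Graph.

Theorem theorem4p5 : (forall r : nat, pseudofinite (T_r r)) /\ pseudofinite T_inf.
Proof.
  split.
  - intros r. apply (pf_Tr r (fun g => Graph.Gr r g.+1)).
    + exact UF.ultra_exists.
    + intros g. apply good_weak. apply Graph.Gr_good. done.
  - apply (pf_Tinf (fun g => Graph.Gr g g.+1)).
    + exact UF.ultra_exists.
    + intros g. apply good_weak. apply Graph.Gr_good. done.
Qed.
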